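(* Let $A,B\in\mathbb{P}_d$ and let $X\in\mathbb{C}^{d\times k}$ have full column rank. Then for every $t\in[0,1]$, $$\operatorname{tr} X^*(A\#_tB)X\le[\operatorname{tr}X^*AX]^{1-t}[\operatorname{tr}X^*BX]^{t}.$$
   Context: $\mathbb{P}_d$ denotes the set of $d\times d$ Hermitian positive definite matrices, and $A\#_tB:=A^{1/2}(A^{-1/2}BA^{-1/2})^tA^{1/2}$ for $A,B\in\mathbb{P}_d$, $t\in[0,1]$. *)

(* Defs.v *)
From HB Require Import structures.
From mathcomp Require Import all_boot all_order all_algebra.
From mathcomp Require Import sesquilinear spectral.
From mathcomp Require Import complex.
From mathcomp Require Import reals exp.

Set Implicit Arguments.
Unset Strict Implicit.
Unset Printing Implicit Defensive.

Import Order.TTheory GRing.Theory Num.Theory.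
Local Open Scope ring_scope.
Local Open Scope sesquilinear_scope.
Local Open Scope complex_scope.

Section Defs.
Context {R : realType}.
Local Notation C := (R[i]).

Definition adjmx m n (X : 'M[C]_(m, n)) : 'M[C]_(n, m) := X ^t*.

(* Hermitian positive definite d x d matrices (the set P_d):
   A = A^* and x^* A x > 0 for every nonzero x (here x = v^*, v a row vector). *)
Definition posdef d (A : 'M[C]_d) : Prop :=
  A \is hermsymmx /\
  forall v : 'rV[C]_d, v != 0 -> 0 < (v *m A *m adjmx v) 0 0.

(* Real power A^t of a Hermitian positive definite matrix, via the spectral
   decomposition A = P^-1 diag(lambda) P (P unitary) provided by spectral.v:
   A^t := P^-1 diag(lambda_i^t) P.  (Only meaningful for A positive definite.) *)
Definition mxpow d (A : 'M[C]_d) (t : R) : 'M[C]_d :=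
  invmx (spectralmx A)
  *m diag_mx (\row_i ((powR (complex.Re (spectral_diag A 0 i)) t)%:C))
  *m spectralmx A.

Definition geomean d (A B : 'M[C]_d) (t : R) : 'M[C]_d :=
  mxpow A (1/2) *m mxpow (mxpow A (-(1/2)) *m B *m mxpow A (-(1/2))) t
  *m mxpow A (1/2).

End Defs.

(* Main.v *)
Require Import Defs.
From HB Require Import structures.
From mathcomp Require Import all_boot all_order all_algebra.
From mathcomp Require Import sesquilinear spectral.
From mathcomp Require Import complex.
From mathcomp Require Import reals exp.

Import Order.TTheory GRing.Theory Num.Theory.
Local Open Scope ring_scope.
Local Open Scope complex_scope.
Section Helpers.
Set Implicit Arguments.
Local Open Scope sesquilinear_scope.
Variable R : realType.
Local Notation C := (R[i]).

Lemma quad_tr n k (Z : 'M[C]_(n, k)) (g : 'rV[C]_n) :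
  \tr (Z ^t* *m diag_mx g *m Z) = \sum_i g 0 i * \sum_j `|Z i j| ^+ 2.
Proof.
rewrite /mxtrace.
under eq_bigr => j _ do rewrite mxE.
under eq_bigr => j _ do under eq_bigr => i _ do rewrite mul_mx_diag !mxE.
rewrite exchange_big /=; apply: eq_bigr => i _.
rewrite big_distrr /=; apply: eq_bigr => j _.
by rewrite normCKC mulrAC mulrC.
Qed.

Lemma quad_vec n (v : 'rV[C]_n) (g : 'rV[C]_n) :
  (v *m diag_mx g *m v ^t*) 0 0 = \sum_i g 0 i * `|v 0 i| ^+ 2.
Proof.
rewrite -trace_mx11 -{1}[v]trmxCK quad_tr; apply: eq_bigr => i _.
by rewrite big_ord1 !mxE norm_conjC.
Qed.
End Helpers.
Section Spec.
Set Implicit Arguments.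
Local Open Scope sesquilinear_scope.
Variable R : realType.
Local Notation C := (R[i]).

Lemma ge0_RRe (z : C) : 0 <= z -> z = (complex.Re z)%:C.
Proof. by move=> z0; rewrite RRe_real // ger0_real. Qed.

Lemma trmxC_mul m n p (A : 'M[C]_(m, n)) (B : 'M[C]_(n, p)) :
  (A *m B) ^t* = B ^t* *m A ^t*.
Proof. by rewrite trmx_mul map_mxM. Qed.

Lemma spec_eq n (M : 'M[C]_n) : M \is hermsymmx ->
  M = (spectralmx M) ^t* *m diag_mx (spectral_diag M) *m spectralmx M.
Proof.
move=> /hermitian_normalmx /orthomx_spectralP {1}->.
by rewrite invmx_unitary // spectral_unitarymx.
Qed.

Lemma delta_norm n (i j : 'I_n) : `|('e_i : 'rV[C]_n) 0 j| ^+ 2 = (i == j)%:R.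
Proof. by rewrite mxE eqxx /= eq_sym; case: (i == j); rewrite ?normr1 ?normr0 ?expr1n ?expr0n. Qed.

Lemma eig_quad n (M : 'M[C]_n) i : M \is hermsymmx ->
  spectral_diag M 0 i =
  ((('e_i : 'rV[C]_n) *m spectralmx M) *m M *m (('e_i : 'rV[C]_n) *m spectralmx M) ^t*) 0 0.
Proof.
move=> hM; have PU := spectral_unitarymx M; have E := @spec_eq n M hM.
set P := spectralmx M in PU E *; set D := spectral_diag M in E *.
rewrite [in RHS]E trmxC_mul !mulmxA mulmxtVK //.
rewrite mulmxtVK //.
rewrite quad_vec (bigD1 i) //= delta_norm eqxx mulr1 big1 ?addr0 //.
by move=> j /negPf ji; rewrite delta_norm eq_sym ji mulr0.
Qed.

Lemma eP_neq0 n (M : 'M[C]_n) i : ('e_i : 'rV[C]_n) *m spectralmx M != 0.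
Proof.
apply/negP => /eqP H.
have : ('e_i : 'rV[C]_n) *m spectralmx M *m (spectralmx M) ^t* = 'e_i.
  by rewrite mulmxtVK // spectral_unitarymx.
rewrite H mul0mx => /matrixP /(_ 0 i); rewrite !mxE !eqxx /= => /eqP.
by rewrite eq_sym oner_eq0.
Qed.

Lemma eig_ge0 n (M : 'M[C]_n) i : M \is hermsymmx ->
  (forall v : 'rV[C]_n, 0 <= (v *m M *m v ^t*) 0 0) -> 0 <= spectral_diag M 0 i.
Proof. by move=> hM H; rewrite eig_quad. Qed.

Lemma eig_gt0 n (M : 'M[C]_n) i : posdef M -> 0 < spectral_diag M 0 i.
Proof. by move=> [hM H]; rewrite eig_quad //; apply: H; exact: eP_neq0. Qed.

End Spec.
Section Pow.
Set Implicit Arguments.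
Local Open Scope sesquilinear_scope.
Variable R : realType.
Local Notation C := (R[i]).

Lemma mxpowE n (M : 'M[C]_n) s : mxpow M s =
  (spectralmx M) ^t* *m
  diag_mx (\row_i ((powR (complex.Re (spectral_diag M 0 i)) s)%:C))
  *m spectralmx M.
Proof. by rewrite /mxpow invmx_unitary // spectral_unitarymx. Qed.

Lemma diag_herm n (g : 'I_n -> R) :
  (diag_mx (\row_i (g i)%:C)) ^t* = diag_mx (\row_i (g i)%:C).
Proof.
apply/matrixP => i j; rewrite !mxE.
have cr : forall x : R, Num.conj (x%:C : C) = x%:C.
  by move=> x; rewrite conj_Creal // complex_real.
case: (eqVneq i j) => [<-|ij]; first by rewrite !mulr1n cr.
by rewrite !mulr0n conjC0.
Qed.

Lemma mxpow_herm n (M : 'M[C]_n) s : (mxpow M s) ^t* = mxpow M s.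
Proof.
by rewrite mxpowE !trmxC_mul trmxCK diag_herm mulmxA.
Qed.

Lemma mxpowD n (M : 'M[C]_n) s u :
  (forall i, 0 < complex.Re (spectral_diag M 0 i)) ->
  mxpow M s *m mxpow M u = mxpow M (s + u).
Proof.
move=> pos; rewrite !mxpowE.
have PU := spectral_unitarymx M.
set P := spectralmx M in PU *.
set f := \row_i _; set g := \row_i _; set h := \row_i _.
rewrite !mulmxA (mulmxtVK _ PU) -(mulmxA (P ^t*) (diag_mx f)) mulmx_diag.
suff -> : \row_j (f 0 j * g 0 j) = h by [].
apply/matrixP => i j; rewrite /f /g /h !mxE.
rewrite -rmorphM powRD //; apply/implyP => _; exact: lt0r_neq0 (pos j).
Qed.

Lemma mxpow0 n (M : 'M[C]_n) : mxpow M 0 = 1%:M.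
Proof.
rewrite mxpowE.
have -> : \row_i ((powR (complex.Re (spectral_diag M 0 i)) 0)%:C) = const_mx (1 : C).
  by apply/matrixP => i j; rewrite !mxE powRr0.
rewrite diag_const_mx mulmx1 -invmx_unitary ?spectral_unitarymx //.
by rewrite mulVmx // spectral_unit.
Qed.

Lemma mxpow1 n (M : 'M[C]_n) :
  M \is hermsymmx -> (forall i, 0 <= spectral_diag M 0 i) -> mxpow M 1 = M.
Proof.
move=> hM pos; rewrite mxpowE.
suff -> : \row_i ((powR (complex.Re (spectral_diag M 0 i)) 1)%:C) = spectral_diag M.
  by rewrite [RHS](@spec_eq _ n M hM).
apply/matrixP => i j; rewrite !mxE ord1 powRr1; first by rewrite -ge0_RRe.
by move: (pos j); rewrite lecE => /andP[_].
Qed.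

End Pow.
Section Real.
Set Implicit Arguments.
Variable R : realType.

Lemma young_t (a b t : R) : 0 <= a -> 0 <= b -> 0 < t < 1 ->
  powR a (1 - t) * powR b t <= (1 - t) * a + t * b.
Proof.
move=> a0 b0 /andP[t0 t1].
have t1' : 0 < 1 - t by rewrite subr_gt0.
have := @conjugate_powR R (powR a (1 - t)) (powR b t) (1 - t)^-1 t^-1
  (powR_ge0 _ _) (powR_ge0 _ _) (ltac:(by rewrite invr_gt0)) (ltac:(by rewrite invr_gt0)).
rewrite !invrK subrK => /(_ erefl).
rewrite -!powRrM !mulfV ?lt0r_neq0 // !powRr1 //.
by rewrite [_ * (1 - t)]mulrC [_ * t]mulrC.
Qed.

Lemma powR_split (lam w t : R) : 0 <= lam -> 0 <= w -> 0 < t < 1 ->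
  powR lam t * w = powR w (1 - t) * powR (lam * w) t.
Proof.
move=> l0 w0 /andP[t0 t1].
case: (eqVneq w 0) => [->|wn0].
  by rewrite mulr0 powR0 ?mul0r // subr_eq0 eq_sym lt_eqF.
rewrite powRM // mulrCA -powRD; last by apply/implyP => _.
by rewrite subrK powRr1.
Qed.

Lemma sum_holder n (lam w : 'I_n -> R) (t : R) : 0 <= t <= 1 ->
  (forall i, 0 <= lam i) -> (forall i, 0 <= w i) ->
  \sum_i powR (lam i) t * w i <=
  powR (\sum_i w i) (1 - t) * powR (\sum_i lam i * w i) t.
Proof.
move=> /andP[t0 t1] l0 w0.
have S0 : 0 <= \sum_i w i by apply: sumr_ge0 => i _.
have T0 : 0 <= \sum_i lam i * w i by apply: sumr_ge0 => i _; apply: mulr_ge0.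
case: (eqVneq t 0) => [->|tn0].
  rewrite subr0 powRr1 // powRr0 mulr1.
  by apply: ler_sum => i _; rewrite powRr0 mul1r.
case: (eqVneq t 1) => [->|tn1].
  rewrite subrr powRr0 mul1r powRr1 //; apply: ler_sum => i _; rewrite powRr1 //.
have tt : 0 < t < 1 by rewrite lt_neqAle eq_sym tn0 t0 lt_neqAle tn1 t1.
have RHS0 : 0 <= powR (\sum_i w i) (1 - t) * powR (\sum_i lam i * w i) t.
  by apply: mulr_ge0; apply: powR_ge0.
case: (eqVneq (\sum_i w i) 0) => [Se|Sn].
  have wz : forall i, w i = 0.
    by move=> i; move/eqP: Se; rewrite psumr_eq0 // => /allP /(_ i) /=; rewrite mem_index_enum => /(_ isT) /eqP.
  by rewrite big1 // => i _; rewrite wz mulr0.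
case: (eqVneq (\sum_i lam i * w i) 0) => [Te|Tn].
  have lwz : forall i, lam i * w i = 0.
    move=> i; move/eqP: Te; rewrite psumr_eq0 => [/allP /(_ i) /=|j _]; last by apply: mulr_ge0.
    by rewrite mem_index_enum => /(_ isT) /eqP.
  rewrite big1 // => i _; have /eqP := lwz i; rewrite mulf_eq0 => /orP[/eqP ->|/eqP ->].
    by rewrite powR0 ?mul0r.
  by rewrite mulr0.
have Sp : 0 < \sum_i w i by rewrite lt_neqAle eq_sym Sn S0.
have Tp : 0 < \sum_i lam i * w i by rewrite lt_neqAle eq_sym Tn T0.
set S := \sum_i w i in Sp S0 Sn RHS0 *; set T := \sum_i lam i * w i in Tp T0 Tn RHS0 *.
set K := powR S (1 - t) * powR T t in RHS0 *.
apply: (@le_trans _ _ (\sum_i K * ((1 - t) * (w i / S) + t * (lam i * w i / T)))).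
  apply: ler_sum => i _; rewrite powR_split //.
  have e1 : powR (w i) (1 - t) = powR S (1 - t) * powR (w i / S) (1 - t).
    by rewrite -powRM ?divr_ge0 // [S * _]mulrC divfK.
  have e2 : powR (lam i * w i) t = powR T t * powR (lam i * w i / T) t.
    by rewrite -powRM ?divr_ge0 ?mulr_ge0 // [T * _]mulrC divfK.
  rewrite e1 e2 mulrACA -/K; apply: ler_wpM2l => //.
  by apply: young_t => //; apply: divr_ge0 => //; apply: mulr_ge0.
rewrite -big_distrr /= big_split /= -!big_distrr /= -!mulr_suml.
by rewrite !divff // !mulr1 subrK mulr1.
Qed.

End Real.
Section Main.
Set Implicit Arguments.
Local Open Scope sesquilinear_scope.
Variable R : realType.
Local Notation C := (R[i]).

Lemma herm_eq n (M : 'M[C]_n) : M \is hermsymmx -> M ^t* = M.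
Proof. by move=> /is_hermitianmxP {2}->; rewrite expr0 scale1r. Qed.

Lemma diag1 n : diag_mx (\row_(i < n) ((1 : R)%:C)) = 1%:M.
Proof. by rewrite -diag_const_mx; congr diag_mx; apply/matrixP => i j; rewrite !mxE. Qed.

Lemma main_lemma (d k : nat) (A B : 'M[C]_d) (X : 'M[C]_(d, k)) (t : R) :
  posdef A -> posdef B -> 0 <= t <= 1 ->
  \tr (adjmx X *m geomean A B t *m X)
    <= ((powR (complex.Re (\tr (adjmx X *m A *m X))) (1 - t))
        * (powR (complex.Re (\tr (adjmx X *m B *m X))) t))%:C.
Proof.
move=> pA pB t01.
have hA : A \is hermsymmx by case: pA.
have hB : B \is hermsymmx by case: pB.
have posA : forall i, 0 < complex.Re (spectral_diag A 0 i).
  by move=> i; have := eig_gt0 i pA; rewrite ltcE => /andP[].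
have posA' : forall i, 0 <= spectral_diag A 0 i by move=> i; apply/ltW/eig_gt0.
have GG : mxpow A (1/2) *m mxpow A (1/2) = A.
  by rewrite mxpowD // -splitr mxpow1.
have GN : mxpow A (1/2) *m mxpow A (-(1/2)) = 1%:M by rewrite mxpowD // subrr mxpow0.
have NG : mxpow A (-(1/2)) *m mxpow A (1/2) = 1%:M by rewrite mxpowD // addNr mxpow0.
rewrite /geomean.
set G := mxpow A (1/2) in GG GN NG *.
set N := mxpow A (-(1/2)) in GN NG *.
have hG : G ^t* = G by exact: mxpow_herm.
have hN : N ^t* = N by exact: mxpow_herm.
clearbody G N.
set Cm := N *m B *m N.
have hC : Cm \is hermsymmx.
  have e : (N *m B *m N) ^t* = N *m B *m N.
    by rewrite !trmxC_mul hN herm_eq // mulmxA.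
  by apply/is_hermitianmxP; rewrite expr0 scale1r /Cm; exact: esym e.
have psdC : forall v : 'rV[C]_d, 0 <= (v *m Cm *m v ^t*) 0 0.
  move=> v; have -> : v *m Cm *m v ^t* = (v *m N) *m B *m (v *m N) ^t*.
    by rewrite trmxC_mul hN /Cm !mulmxA.
  case: (eqVneq (v *m N) 0) => [->|vn0]; first by rewrite !mul0mx mxE.
  by apply/ltW; case: pB => _; apply.
have BE : B = G *m Cm *m G by rewrite /Cm !mulmxA GN mul1mx -mulmxA NG mulmx1.
clearbody Cm.
have eigC : forall i, 0 <= spectral_diag Cm 0 i by move=> i; apply: eig_ge0.
have QU := spectral_unitarymx Cm.
set Q := spectralmx Cm in QU *.
set lam := fun i => complex.Re (spectral_diag Cm 0 i).
have DcE : spectral_diag Cm = \row_i (lam i)%:C.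
  by apply/matrixP => i j; rewrite !mxE ord1 /lam -ge0_RRe.
have CmE : Cm = Q ^t* *m diag_mx (\row_i (lam i)%:C) *m Q.
  by rewrite -DcE; exact: (@spec_eq _ _ Cm hC).
set Z := Q *m G *m X.
have hZ : Z ^t* = adjmx X *m G *m Q ^t* by rewrite /Z !trmxC_mul hG !mulmxA.
have E1 : adjmx X *m (G *m mxpow Cm t *m G) *m X =
    Z ^t* *m diag_mx (\row_i (powR (lam i) t)%:C) *m Z.
  by rewrite hZ mxpowE -/Q /Z !mulmxA.
have E2 : adjmx X *m A *m X = Z ^t* *m diag_mx (\row_i ((1 : R)%:C)) *m Z.
  by rewrite hZ diag1 mulmx1 /Z -GG !mulmxA mulmxKtV.
have E3 : adjmx X *m B *m X = Z ^t* *m diag_mx (\row_i (lam i)%:C) *m Z.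
  by rewrite hZ /Z BE CmE !mulmxA.
clearbody Z.
set om := fun i => complex.Re (\sum_j `|Z i j| ^+ 2).
have omE : forall i, \sum_j `|Z i j| ^+ 2 = (om i)%:C.
  by move=> i; apply: ge0_RRe; apply: sumr_ge0 => j _; apply: exprn_ge0.
have om0 : forall i, 0 <= om i.
  by move=> i; rewrite -lecR -omE; apply: sumr_ge0 => j _; apply: exprn_ge0.
have lam0 : forall i, 0 <= lam i.
  by move=> i; move: (eigC i); rewrite lecE => /andP[].
have QT : forall g : 'I_d -> R, \tr (Z ^t* *m diag_mx (\row_i (g i)%:C) *m Z) = (\sum_i g i * om i)%:C.
  move=> g; rewrite quad_tr rmorph_sum; apply: eq_bigr => i _.
  by rewrite mxE omE rmorphM.
have ReC : forall x : R, complex.Re (x%:C) = x by [].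
rewrite E1 E2 E3 !QT !ReC lecR.
have -> : \sum_i 1 * om i = \sum_i om i by apply: eq_bigr => i _; exact: mul1r.
exact: sum_holder.
Qed.

End Main.

Unset Implicit Arguments.

Theorem corollary5 (R : realType) (d k : nat) (A B : 'M[R[i]]_d)
    (X : 'M[R[i]]_(d, k)) (t : R) :
  posdef A -> posdef B -> \rank X = k ->
  0 <= t <= 1 ->
  \tr (adjmx X *m geomean A B t *m X)
    <= ((powR (complex.Re (\tr (adjmx X *m A *m X))) (1 - t))
        * (powR (complex.Re (\tr (adjmx X *m B *m X))) t))%:C.
Proof. by move=> pA pB _ t01; apply: main_lemma. Qed.
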